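(* For every integer $n\ge 1$ and every integer $i$ with $0\le i\le n$, there exists a cyclic two-fold directed triple system DTS$(6n+1,2)$ with fine structure $(c_1,c_2)=(4n-4i,\,2i)$, and there exists a cyclic two-fold Mendelsohn triple system MTS$(6n+1,2)$ with fine structure $(c_1,c_2)=(4n-4i,\,2i)$.
   Context: A directed triple $[a,b,c]$ ($a,b,c$ distinct) contains the ordered pairs $(a,b),(a,c),(b,c)$. A cyclic triple $\langle a,b,c\rangle$ ($a,b,c$ distinct, with $\langle a,b,c\rangle=\langle b,c,a\rangle=\langle c,a,b\rangle$) contains the ordered pairs $(a,b),(b,c),(c,a)$. A cyclic $\lambda$-fold directed triple system DTS$(v,\lambda)$ (resp. Mendelsohn triple system MTS$(v,\lambda)$) is a multiset of directed triples (resp. cyclic triples) on $\mathbb Z_v$ such that each ordered pair of distinct elements of $\mathbb Z_v$ is contained in exactly $\lambda$ triples (with multiplicity), and the multiset is invariant under the translation $x\mapsto x+1$. Its triples form translation orbits with multiplicities; a base block is an orbit representative. The fine structure is $(c_1,\ldots,c_\lambda)$, where $c_i$ is the number of distinct base blocks (orbits) occurring with multiplicity exactly $i$. *)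

(* Defs.v *)
From mathcomp Require Import all_boot.
Set Implicit Arguments. Unset Strict Implicit. Unset Printing Implicit Defensive.

(* Points are elements of Z_v, represented as 'I_v with addition mod v. *)
Lemma ord_gt0 v (x : 'I_v) : 0 < v.
Proof. by case: v x => [[]|]. Qed.

Definition padd v (k : nat) (x : 'I_v) : 'I_v := Ordinal (ltn_pmod (x + k) (ord_gt0 x)).

Definition trip v := ('I_v * 'I_v * 'I_v)%type.

Definition tshift v (k : nat) (t : trip v) : trip v :=
  let '(a, b, c) := t in (padd k a, padd k b, padd k c).

Definition distinct3 v (t : trip v) : bool :=
  let '(a, b, c) := t in [&& a != b, a != c & b != c].

(* ordered pairs contained in a directed triple [a,b,c] *)
Definition dpairs v (t : trip v) : seq ('I_v * 'I_v) :=
  let '(a, b, c) := t in [:: (a, b); (a, c); (b, c)].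
(* ordered pairs contained in a cyclic triple <a,b,c> *)
Definition cpairs v (t : trip v) : seq ('I_v * 'I_v) :=
  let '(a, b, c) := t in [:: (a, b); (b, c); (c, a)].

Definition rot v (t : trip v) : trip v := let '(a, b, c) := t in (b, c, a).

(* identification of representations: directed triples are equal iff equal;
   cyclic triples <a,b,c> = <b,c,a> = <c,a,b> *)
Definition deqv v (t u : trip v) : bool := u == t.
Definition ceqv v (t u : trip v) : bool := [|| u == t, u == rot t | u == rot (rot t)].

(* A multiset of triples is given by a list s of representations; the
   multiplicity of the triple represented by t is count (eqv t) s. *)
Definition mult v (eqv : trip v -> trip v -> bool) (s : seq (trip v)) (t : trip v) : nat :=
  count (eqv t) s.

Definition cyclic_system v (lam : nat) (eqv : trip v -> trip v -> bool)
    (pairs : trip v -> seq ('I_v * 'I_v)) (s : seq (trip v)) : Prop :=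
  [/\ all (@distinct3 v) s,
      (forall x y : 'I_v, x != y ->
         \sum_(t <- s) count (pred1 (x, y)) (pairs t) = lam)
    & (forall t : trip v, mult eqv s t = mult eqv s (tshift 1 t))].

Definition cyclic_DTS v lam (s : seq (trip v)) := cyclic_system lam (@deqv v) (@dpairs v) s.
Definition cyclic_MTS v lam (s : seq (trip v)) := cyclic_system lam (@ceqv v) (@cpairs v) s.

Definition torbit v (eqv : trip v -> trip v -> bool) (t : trip v) : {set trip v} :=
  [set u | [exists k : 'I_v, eqv (tshift k t) u]].

(* c_i : number of distinct orbits occurring with multiplicity exactly i *)
Definition fine_c v (eqv : trip v -> trip v -> bool) (s : seq (trip v)) (i : nat) : nat :=
  #|[set torbit eqv t | t in [pred t : trip v | distinct3 t && (mult eqv s t == i)]]|.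

(* Main.v *)
Require Import Defs.
From mathcomp Require Import all_boot zify.
Set Implicit Arguments. Unset Strict Implicit. Unset Printing Implicit Defensive.
Local Notation rot := Defs.rot.

Lemma count_sum (T : Type) (a : pred T) (r : seq T) : count a r = \sum_(j <- r) a j.
Proof. rewrite -sum1_count big_mkcond; apply: eq_bigr => j _; by case: (a j). Qed.

Lemma sum_ge (I : eqType) (r : seq I) (P : pred I) (F : I -> nat) x :
  x \in r -> P x -> F x <= \sum_(i <- r | P i) F i.
Proof. move=> xr Px; rewrite (big_rem x xr) Px; exact: leq_addr. Qed.

Section Gen.
Variable v : nat.
Hypothesis vpos : 0 < v.

Lemma padd_inj k : injective (@padd v k).
Proof.
move=> x y /(congr1 val) /= /eqP; rewrite eqn_modDr !modn_small //.
by move/eqP/val_inj.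
Qed.
Arguments padd_inj : clear implicits.

Lemma tshift_inj k : injective (@tshift v k).
Proof.
move=> [[a b] c] [[a' b'] c'] /= [] H1 H2 H3.
have F (x y : 'I_v) : x + k = y + k %[mod v] -> x = y.
  by move=> H; apply: (padd_inj k); apply: val_inj.
by rewrite (F _ _ H1) (F _ _ H2) (F _ _ H3).
Qed.

Lemma tshift_comp k k' (t : trip v) : tshift k (tshift k' t) = tshift (k' + k) t.
Proof.
case: t => [[a b] c] /=; congr (_, _, _); try congr (_, _);
  apply: val_inj => /=; by rewrite modnDml addnA.
Qed.

Lemma tshift_mod k (t : trip v) : tshift (k %% v) t = tshift k t.
Proof.
case: t => [[a b] c] /=; congr (_, _, _); try congr (_, _);
  apply: val_inj => /=; by rewrite modnDmr.
Qed.

Lemma tshift0 (t : trip v) : tshift 0 t = t.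
Proof.
case: t => [[a b] c] /=; congr (_, _, _); try congr (_, _);
  apply: val_inj => /=; by rewrite addn0 modn_small.
Qed.

Lemma tshift_vk k (t : trip v) : tshift (v * k) t = t.
Proof. by rewrite -tshift_mod mulnC modnMl tshift0. Qed.

Lemma rot_tshift k (t : trip v) : rot (tshift k t) = tshift k (rot t).
Proof. by case: t => [[a b] c]. Qed.

Lemma rot3 (t : trip v) : rot (rot (rot t)) = t.
Proof. by case: t => [[a b] c]. Qed.

Lemma distinct3_shift k (t : trip v) : distinct3 (tshift k t) = distinct3 t.
Proof. by case: t => [[a b] c] /=; rewrite !(inj_eq (@padd_inj k)). Qed.

Lemma predmul k : k + v.-1 * k = v * k.
Proof. by rewrite -{2}(prednK vpos) mulSn. Qed.

Definition good (e : trip v -> trip v -> bool) :=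
  [/\ forall t, e t t, forall t u, e t u = e u t,
      forall t u w, e t u -> e u w -> e t w
    & forall k t u, e (tshift k t) (tshift k u) = e t u].

Lemma deqv_good : good (@deqv v).
Proof.
split; rewrite /deqv.
- by move=> t.
- by move=> t u; rewrite eq_sym.
- by move=> t u w /eqP -> /eqP ->.
- by move=> k t u; rewrite (inj_eq (@tshift_inj k)).
Qed.

Lemma rot_eq (u t : trip v) : (u == rot t) = (t == rot (rot u)).
Proof.
case: u => [[a b] c]; case: t => [[a' b'] c'] /=.
by apply/eqP/eqP => [[-> -> ->]|[-> -> ->]].
Qed.

Lemma ceqv_good : good (@ceqv v).
Proof.
split; rewrite /ceqv.
- by move=> t; rewrite eqxx.
- move=> t u; rewrite (eq_sym u t) (rot_eq u t) -(rot_eq t u).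
  by case: (t == u); case: (t == rot (rot u)); case: (t == rot u).
- move=> t u w /or3P [/eqP->|/eqP->|/eqP->] /or3P [/eqP->|/eqP->|/eqP->];
    by rewrite ?rot3 ?eqxx ?orbT.
- by move=> k t u; rewrite !rot_tshift !(inj_eq (@tshift_inj k)).
Qed.

Lemma torbitP (e : trip v -> trip v -> bool) (t u : trip v) :
  reflect (exists k, e (tshift k t) u) (u \in torbit e t).
Proof.
rewrite inE; apply: (iffP existsP) => [[k Hk]|[k Hk]]; first by exists k.
exists (Ordinal (ltn_pmod k vpos)); by rewrite /= tshift_mod.
Qed.

Lemma torbit_self (e : trip v -> trip v -> bool) t : good e -> t \in torbit e t.
Proof. case=> r _ _ _; apply/torbitP; exists 0; by rewrite tshift0. Qed.

Lemma torbit_eq (e : trip v -> trip v -> bool) t g : good e -> t \in torbit e g -> torbit e t = torbit e g.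
Proof.
move=> [r s tr sh] /torbitP [k Hk]; apply/setP => u.
apply/torbitP/torbitP => [[k' H]|[k1 H]].
- exists (k + k'); apply: tr H; by rewrite -tshift_comp sh.
- exists (k1 + (v.-1) * k); apply: (tr _ _ _ _ H); rewrite s.
  have E : tshift (k1 + v.-1 * k) (tshift k g) = tshift k1 g.
    rewrite tshift_comp.
    have -> : k + (k1 + v.-1 * k) = k1 + v * k by rewrite -predmul; lia.
    by rewrite -tshift_mod addnC mulnC modnMDl tshift_mod.
  by rewrite -E sh.
Qed.

Definition orb (g : trip v) := [seq tshift (nat_of_ord k) g | k : 'I_v <- index_enum 'I_v].
Definition sys (bases : seq (trip v)) := flatten (map orb bases).

Lemma count_orb (e : trip v -> trip v -> bool) g t : good e ->
  (forall j, e g (tshift j g) -> j %% v = 0) ->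
  count (e t) (orb g) = (t \in torbit e g).
Proof.
move=> [r s tr sh] stab; rewrite count_map.
case: (boolP (t \in torbit e g)) => [|nin].
- rewrite inE => /existsP [k0 Hk0].
  rewrite (eq_count (a2 := pred1 k0)).
    by rewrite (count_uniq_mem _ (index_enum_uniq _)) mem_index_enum.
  move=> k /=; apply/idP/eqP => [Hk|->]; last by rewrite s.
  have H1 : e (tshift k g) (tshift k0 g) by apply: (tr _ t); rewrite s.
  move: H1; rewrite -(sh (v.-1 * k)) !tshift_comp.
  rewrite predmul.
  rewrite tshift_vk => /stab H2.
  apply: val_inj => /=.
  have E1 : (k0 + v.-1 * k + k) %% v = k %% v by rewrite -modnDml H2.
  have E2 : k0 + v.-1 * k + k = k0 + v * k by rewrite -predmul; lia.
  move: E1; rewrite E2 addnC mulnC modnMDl !modn_small //.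
- rewrite (eq_count (a2 := pred0)) ?count_pred0 // => k /=.
  apply/negP => Hk; case/negP: nin; apply/torbitP; exists k; by rewrite s.
Qed.

Lemma count_orb_shift (e : trip v -> trip v -> bool) g t : good e ->
  count (e (tshift 1 t)) (orb g) = count (e t) (orb g).
Proof.
move=> [r s tr sh]; rewrite !count_map !count_sum.
rewrite (reindex_inj (@padd_inj 1)) /=.
apply: eq_bigr => k _ /=.
have -> : tshift (padd 1 k) g = tshift 1 (tshift k g) by rewrite tshift_comp -[RHS]tshift_mod.
by rewrite sh.
Qed.


Lemma mult_sys (e : trip v -> trip v -> bool) bases t :
  mult e (sys bases) t = \sum_(B <- bases) count (e t) (orb B).
Proof. by rewrite /mult /sys count_flatten sumnE !big_map. Qed.

Lemma sys_shift (e : trip v -> trip v -> bool) bases t : good e ->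
  mult e (sys bases) t = mult e (sys bases) (tshift 1 t).
Proof.
move=> ge; rewrite !mult_sys; apply: eq_bigr => B _; by rewrite count_orb_shift.
Qed.

Lemma sys_distinct bases : all (@distinct3 v) bases -> all (@distinct3 v) (sys bases).
Proof.
move=> /allP H; apply/allP => t /flatten_mapP [B /H HB] /mapP [k _ ->].
by rewrite distinct3_shift.
Qed.

Definition dif (p q : 'I_v) : nat := (q + v - p) %% v.

Lemma modM (p q x y : nat) : p <= v -> x <= v ->
  ((q + v - p) %% v == (y + v - x) %% v) = ((q + x) %% v == (y + p) %% v).
Proof.
move=> pv xv; rewrite -(eqn_modDr (p + x)).
have -> : q + v - p + (p + x) = q + x + v by lia.
have -> : y + v - x + (p + x) = y + p + v by lia.
by rewrite !modnDr.
Qed.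

Lemma Lsum (p q x y : 'I_v) :
  \sum_(k : 'I_v) ((padd k p, padd k q) == (x, y)) = (dif p q == dif x y).
Proof.
rewrite /dif (modM _ _ (ltnW (ltn_ord p)) (ltnW (ltn_ord x))).
transitivity (\sum_(k : 'I_v) ((padd k p == x) * ((q + x) %% v == (y + p) %% v))).
  apply: eq_bigr => k _; rewrite xpair_eqE.
  case: (boolP (padd k p == x)) => [/eqP <-|] //=.
  rewrite -(inj_eq val_inj) /= mul1n modnDmr.
  rewrite -[X in _ == X](modn_small (ltn_ord y)) -(eqn_modDr p).
  by have -> : q + k + p = q + (p + k) by lia.
rewrite -big_distrl /=.
have -> : \sum_(k : 'I_v) (padd k p == x) = 1.
  have E : forall k : 'I_v, padd k p = padd p k.
    by move=> k; apply: val_inj => /=; rewrite addnC.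
  under eq_bigr => k _ do rewrite E.
  rewrite -(reindex_inj (padd_inj p) (P := xpredT) (F := fun k => nat_of_bool (k == x))) /=.
  rewrite (bigD1 x) //= eqxx big1 // => k /negbTE -> //.
by rewrite mul1n.
Qed.

Definition pshift k (pq : 'I_v * 'I_v) := (padd k pq.1, padd k pq.2).

Lemma cover (pf : trip v -> seq ('I_v * 'I_v)) bases x y :
  (forall k t, pf (tshift k t) = map (pshift k) (pf t)) ->
  \sum_(t <- sys bases) count (pred1 (x, y)) (pf t) =
  \sum_(B <- bases) \sum_(pq <- pf B) (dif pq.1 pq.2 == dif x y).
Proof.
move=> Hpf; rewrite big_flatten big_map; apply: eq_bigr => B _.
rewrite big_map.
under eq_bigr => k _ do rewrite Hpf count_map count_sum.
rewrite exchange_big /=; apply: eq_bigr => [[p q]] _ /=.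
by rewrite -Lsum.
Qed.

Lemma dpairs_shift k t : dpairs (tshift k t) = map (pshift k) (@dpairs v t).
Proof. by case: t => [[a b] c]. Qed.
Lemma cpairs_shift k t : cpairs (tshift k t) = map (pshift k) (@cpairs v t).
Proof. by case: t => [[a b] c]. Qed.

Lemma dif_neq0 (x y : 'I_v) : x != y -> 0 < dif x y.
Proof.
move=> nxy; rewrite lt0n; apply: contra nxy => /eqP H.
have : dif x x == dif x y by rewrite H /dif addKn modnn.
rewrite /dif (modM _ _ (ltnW (ltn_ord x)) (ltnW (ltn_ord x))) eqn_modDr.
rewrite (modn_small (ltn_ord x)) (modn_small (ltn_ord y)) => /eqP E.
by apply/eqP; apply: val_inj.
Qed.

Lemma dif_lt (x y : 'I_v) : dif x y < v.
Proof. exact: (ltn_pmod _ vpos). Qed.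

Lemma sys_cover (pf : trip v -> seq ('I_v * 'I_v)) bases lam :
  (forall k t, pf (tshift k t) = map (pshift k) (pf t)) ->
  (forall d, 0 < d < v -> \sum_(B <- bases) \sum_(pq <- pf B) (dif pq.1 pq.2 == d) = lam) ->
  forall x y : 'I_v, x != y -> \sum_(t <- sys bases) count (pred1 (x, y)) (pf t) = lam.
Proof.
move=> Hpf Hd x y nxy; rewrite cover //; apply: Hd.
by rewrite dif_neq0 // dif_lt.
Qed.

Section Fine.
Variables (I : eqType) (idx : seq I) (gen : I -> trip v) (mu : I -> nat).
Definition bases_of := flatten [seq nseq (mu q) (gen q) | q <- idx].

Theorem fine_gen (e : trip v -> trip v -> bool) m : good e -> uniq idx ->
  (forall q q', q \in idx -> q' \in idx -> gen q' \in torbit e (gen q) -> q = q') ->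
  (forall q, q \in idx -> forall j, e (gen q) (tshift j (gen q)) -> j %% v = 0) ->
  (forall q, q \in idx -> distinct3 (gen q)) -> 0 < m ->
  fine_c e (sys bases_of) m = count (fun q => mu q == m) idx.
Proof.
move=> ge uidx H2 H3 H4 m0.
have multE t : mult e (sys bases_of) t = \sum_(q <- idx) mu q * (t \in torbit e (gen q)).
  rewrite mult_sys /bases_of big_flatten big_map; apply: eq_big_seq => q qin.
  by rewrite big_nseq iter_addn_0 mulnC (count_orb _ ge (H3 q qin)).
have uo t q q' : q \in idx -> q' \in idx -> t \in torbit e (gen q) ->
    t \in torbit e (gen q') -> q = q'.
  move=> qi q'i tq tq'; apply: H2 => //.
  rewrite -(torbit_eq ge tq) (torbit_eq ge tq'); exact: torbit_self.
have mult1 t q : q \in idx -> t \in torbit e (gen q) -> mult e (sys bases_of) t = mu q.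
  move=> qi tq; rewrite multE (bigD1_seq q) //= tq muln1 big1_seq ?addn0 //.
  move=> q' /andP [nq q'i]; case: (boolP (t \in torbit e (gen q'))) => [tq'|]; last by rewrite muln0.
  by rewrite (uo t q' q) ?eqxx in nq.
have mult0 t : ~~ has (fun q => t \in torbit e (gen q)) idx -> mult e (sys bases_of) t = 0.
  move=> /hasPn nh; rewrite multE big1_seq // => q /andP [_ qi].
  by rewrite (negbTE (nh q qi)) muln0.
rewrite /fine_c.
have -> : [set torbit e t | t in [pred t : trip v | distinct3 t && (mult e (sys bases_of) t == m)]]
  = [set O in map (fun q => torbit e (gen q)) (filter (fun q => mu q == m) idx)].
  apply/setP => O; rewrite inE; apply/imsetP/mapP.
  - move=> [t]; rewrite inE /= => /andP [_ /eqP Hm] ->.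
    case: (boolP (has (fun q => t \in torbit e (gen q)) idx)) => [/hasP [q qi tq]|nh].
    + exists q; first by rewrite mem_filter qi andbT -Hm (mult1 t q).
      exact: torbit_eq.
    + by move: Hm; rewrite mult0 // => H0; rewrite -H0 in m0.
  - move=> [q]; rewrite mem_filter => /andP [/eqP Hm qi] ->.
    exists (gen q) => //; rewrite inE /= H4 //=.
    by rewrite (mult1 _ q) // ?Hm //; exact: torbit_self.
have U : uniq (map (fun q => torbit e (gen q)) (filter (fun q => mu q == m) idx)).
  rewrite map_inj_in_uniq ?filter_uniq // => q q' qi q'i E.
  rewrite mem_filter in qi; rewrite mem_filter in q'i.
  case/andP: qi => _ qi; case/andP: q'i => _ q'i.
  apply: H2 => //; rewrite E; exact: torbit_self.
by rewrite cardsE (card_uniqP U) size_map size_filter.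
Qed.
End Fine.


Lemma dif_shift k (p q : 'I_v) : dif (padd k p) (padd k q) = dif p q.
Proof.
apply/eqP; rewrite /dif /= (modM _ _ (ltnW (ltn_pmod _ vpos)) (ltnW (ltn_ord p))).
by rewrite modnDml modnDmr; apply/eqP; congr (_ %% _); lia.
Qed.

Definition D (t : trip v) := let '(x, y, z) := t in (dif x y, dif y z, dif z x).
Definition rotD (w : nat * nat * nat) := let '(a, b, c) := w in (b, c, a).

Lemma D_shift k t : D (tshift k t) = D t.
Proof. by case: t => [[a b] c] /=; rewrite !dif_shift. Qed.
Lemma D_rot t : D (rot t) = rotD (D t).
Proof. by case: t => [[a b] c]. Qed.

Definition om (x : nat) : 'I_v := Ordinal (ltn_pmod x vpos).
Definition blk (a b : nat) : trip v := (om 0, om a, om (a + b)).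

Lemma dif_0a a : a < v -> dif (om 0) (om a) = a.
Proof. by move=> av; rewrite /dif /= mod0n subn0 modnDr !modn_small. Qed.

Lemma dif_ab a b : a < v -> b < v -> dif (om a) (om (a + b)) = b.
Proof.
move=> av bv; rewrite /dif /= (modn_small av).
case: (ltnP (a + b) v) => h.
  by rewrite (modn_small h) (_ : a + b + v - a = b + v) ?modnDr ?modn_small //; lia.
have -> : (a + b) %% v = a + b - v.
  by rewrite -{1}(subnK h) modnDr modn_small //; lia.
by rewrite (_ : a + b - v + v - a = b) ?modn_small //; lia.
Qed.

Lemma dif_c0 a b : dif (om (a + b)) (om 0) = (v - (a + b) %% v) %% v.
Proof. by rewrite /dif /= mod0n add0n. Qed.

Lemma dif_aa a : dif (om a) (om a) = 0.
Proof. by rewrite /dif addKn modnn. Qed.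

Lemma blk_distinct a b : 0 < a < v -> 0 < b < v -> (a + b) %% v != 0 ->
  distinct3 (blk a b).
Proof.
move=> /andP [a0 av] /andP [b0 bv] c0 /=.
apply/and3P; split.
- by rewrite -(inj_eq val_inj) /= mod0n (modn_small av) eq_sym -lt0n.
- by rewrite -(inj_eq val_inj) /= mod0n eq_sym.
- apply/negP => /eqP E; move: (dif_ab av bv); rewrite -E dif_aa => b00.
  by rewrite -b00 in b0.
Qed.

Section Constr.
Variables (N i : nat) (fa fb fx : nat -> nat).
Hypothesis Hrange : forall j, j < N -> [/\ 0 < fa j < v, 0 < fb j < v & 0 < fx j < v].
Hypothesis Hpart : forall d, 0 < d < v ->
  \sum_(j <- iota 0 N) count (pred1 d) [:: fa j; fb j; fx j] = 1.
Hypothesis Hi : 2 * i <= N.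
Hypothesis Hc0 : forall j, j < N -> (fa j + fb j) %% v != 0.

Definition tr j := [:: fa j; fb j; fx j].

Lemma tr_ge2 j d : j < N -> 0 < d < v -> 2 <= count (pred1 d) (tr j) -> False.
Proof.
move=> jN dv c2; have := Hpart dv.
have := sum_ge (r := iota 0 N) (P := xpredT) (fun j => count (pred1 d) (tr j)) (x := j).
rewrite mem_iota /= jN => /(_ isT isT) H E; move: H; rewrite /tr E => H.
by have := leq_trans c2 H.
Qed.

Lemma neq_ab j : j < N -> fa j != fb j.
Proof.
move=> jN; apply/negP => /eqP E; case: (Hrange jN) => ha _ _.
apply: (tr_ge2 jN ha); by rewrite /tr /= E eqxx; case: (fx j == fb j).
Qed.
Lemma neq_ax j : j < N -> fa j != fx j.
Proof.
move=> jN; apply/negP => /eqP E; case: (Hrange jN) => ha _ _.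
apply: (tr_ge2 jN ha); by rewrite /tr /= E eqxx; case: (fb j == fx j); rewrite /= ?addn0.
Qed.
Lemma neq_bx j : j < N -> fb j != fx j.
Proof.
move=> jN; apply/negP => /eqP E; case: (Hrange jN) => _ hb _.
apply: (tr_ge2 jN hb); by rewrite /tr /= E eqxx; case: (fa j == fx j).
Qed.

Lemma idx_rec j j' d : j < N -> j' < N -> d \in tr j -> d \in tr j' -> j = j'.
Proof.
move=> jN j'N dj dj'; case: (eqVneq j j') => // njj; exfalso.
have dv : 0 < d < v.
  move: dj; case: (Hrange jN) => ha hb hx; by rewrite !inE => /or3P [/eqP->|/eqP->|/eqP->].
have := Hpart dv.
rewrite (bigD1_seq j) ?iota_uniq ?mem_iota ?jN //=.
have := sum_ge (r := iota 0 N) (P := fun i => i != j) (fun j => count (pred1 d) (tr j)) (x := j').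
rewrite mem_iota /= j'N eq_sym njj => /(_ isT isT).
have c1 : 0 < count (pred1 d) (tr j) by rewrite -has_count has_pred1.
have c1' : 0 < count (pred1 d) (tr j') by rewrite -has_count has_pred1.
move: c1 c1' => /= c1 c1'; lia.
Qed.

Definition gen (q : nat * bool) :=
  if q.2 then blk (fa q.1) (fb q.1) else blk (fb q.1) (fa q.1).
Definition idx := [seq (j, true) | j <- iota 0 N] ++ [seq (j, false) | j <- iota (2 * i) (N - 2 * i)].
Definition mu (q : nat * bool) := if q.2 && (q.1 < 2 * i) then 2 else 1.

Lemma idxN q : q \in idx -> q.1 < N.
Proof.
rewrite mem_cat => /orP [] /mapP [j]; rewrite mem_iota => /andP [_ h] -> //=.
by move: h; rewrite subnKC.
Qed.

Lemma idx_uniq : uniq idx.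
Proof.
rewrite cat_uniq (map_inj_uniq (fun a b (E : (a, true) = (b, true)) => congr1 fst E)).
rewrite (map_inj_uniq (fun a b (E : (a, false) = (b, false)) => congr1 fst E)) !iota_uniq /=.
rewrite andbT; apply/hasPn => q /mapP [j _ ->]; apply/negP => /mapP [j' _ /(congr1 snd)]. by [].
Qed.

Lemma gen_distinct q : q \in idx -> distinct3 (gen q).
Proof.
move=> /idxN qN; case: (Hrange qN) => ha hb _; rewrite /gen.
case: q.2 qN => qN; apply: blk_distinct => //; first exact: Hc0.
by rewrite addnC Hc0.
Qed.

Lemma D_gen q : q.1 < N -> D (gen q) =
  if q.2 then (fa q.1, fb q.1, (v - (fa q.1 + fb q.1) %% v) %% v)
  else (fb q.1, fa q.1, (v - (fa q.1 + fb q.1) %% v) %% v).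
Proof.
move=> qN; case: (Hrange qN) => /andP [_ ha] /andP [_ hb] _.
rewrite /gen; case: q.2 => /=; rewrite dif_0a // dif_ab // dif_c0 //.
by rewrite addnC.
Qed.

Lemma stab_d q : q \in idx -> forall j, deqv (gen q) (tshift j (gen q)) -> j %% v = 0.
Proof.
move=> _ j /eqP E; have := congr1 (fun t : trip v => nat_of_ord t.1.1) E.
by rewrite /gen; case: q.2 => /=; rewrite mod0n add0n.
Qed.

Lemma stab_c q : q \in idx -> forall j, ceqv (gen q) (tshift j (gen q)) -> j %% v = 0.
Proof.
move=> qi j; have qN := idxN qi.
rewrite /ceqv => /or3P [] /eqP.
- by move/eqP/stab_d; apply.
- move/(congr1 D); rewrite D_shift D_rot D_gen //.
  case: q.2 => [[E _ _]|[E _ _]]; first by move: (neq_ab qN); rewrite E eqxx.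
  by move: (neq_ab qN); rewrite E eqxx.
- move/(congr1 D); rewrite D_shift !D_rot D_gen //.
  case: q.2 => [[_ E _]|[_ E _]]; first by move: (neq_ab qN); rewrite E eqxx.
  by move: (neq_ab qN); rewrite E eqxx.
Qed.


Lemma R_tr j j' x : j < N -> j' < N -> x \in tr j -> x \in tr j' -> j = j'.
Proof. exact: idx_rec. Qed.

Ltac mem3 := rewrite /tr !inE; apply/or3P;
  first [ by constructor 1; apply/eqP; lia
        | by constructor 2; apply/eqP; lia
        | by constructor 3; apply/eqP; lia ].

Lemma orb_d q q' : q \in idx -> q' \in idx -> gen q' \in torbit (@deqv v) (gen q) -> q = q'.
Proof.
case: q => j b; case: q' => j' b' qi q'i /torbitP [k /eqP E].
have jN := idxN qi; have j'N := idxN q'i; simpl in jN, j'N.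
have := congr1 D E; rewrite D_shift !D_gen //=.
move: (neq_ab jN) (neq_ax jN) (neq_bx jN) => /eqP n1 /eqP n2 /eqP n3.
case: b b' {qi q'i E} => [] [] [E1 E2 E3];
  (have jj : j = j' by apply: (R_tr (x := fa j') jN j'N); [mem3 | mem3]); subst j';
  first [done | exfalso; lia].
Qed.

Hypothesis HxM : forall j, j < N -> fx j = (v - (fa j + fb j) %% v) %% v.

Lemma orb_c q q' : q \in idx -> q' \in idx -> gen q' \in torbit (@ceqv v) (gen q) -> q = q'.
Proof.
case: q => j b; case: q' => j' b' qi q'i /torbitP [k].
have jN := idxN qi; have j'N := idxN q'i; simpl in jN, j'N.
move: (neq_ab jN) (neq_ax jN) (neq_bx jN) => /eqP n1 /eqP n2 /eqP n3.
rewrite /ceqv => /or3P [] /eqP /(congr1 D); rewrite ?D_rot D_shift !D_gen //= -(HxM jN) -(HxM j'N);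
case: b b' {qi q'i} => [] [] [E1 E2 E3];
  (have jj : j = j' by apply: (R_tr (x := fa j') jN j'N); [mem3 | mem3]); subst j';
  first [done | exfalso; lia].
Qed.


Lemma dif_0c c : dif (om 0) (om c) = c %% v.
Proof. by rewrite /dif /= mod0n subn0 modnDr modn_mod. Qed.

Lemma cover_gen (pf : trip v -> seq ('I_v * 'I_v)) d :
  0 < d < v ->
  (forall q, q \in idx -> \sum_(pq <- pf (gen q)) (dif pq.1 pq.2 == d) = count (pred1 d) (tr q.1)) ->
  \sum_(B <- bases_of idx gen mu) \sum_(pq <- pf B) (dif pq.1 pq.2 == d) = 2.
Proof.
move=> dv HS; rewrite /bases_of big_flatten big_map.
transitivity (\sum_(q <- idx) mu q * count (pred1 d) (tr q.1)).
  apply: eq_big_seq => q qi; by rewrite big_nseq iter_addn_0 mulnC HS.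
transitivity (2 * \sum_(j <- iota 0 N) count (pred1 d) (tr j)); last by rewrite Hpart.
rewrite /idx big_cat !big_map /=.
rewrite (@eq_big_seq _ _ _ _ (iota (2 * i) (N - 2 * i)) _ (fun j => count (pred1 d) (tr j))); last first.
  by move=> j _; rewrite /mu /= mul1n.
have -> : iota 0 N = iota 0 (2 * i) ++ iota (2 * i) (N - 2 * i) by rewrite -iotaD subnKC.
rewrite !big_cat /=.
rewrite (@eq_big_seq _ _ _ _ (iota 0 (2 * i)) _ (fun j => 2 * count (pred1 d) (tr j))); last first.
  by move=> j; rewrite mem_iota add0n => /andP [_ h]; rewrite /mu /= h.
rewrite (@eq_big_seq _ _ _ _ (iota (2 * i) (N - 2 * i)) _ (fun j => count (pred1 d) (tr j))); last first.
  move=> j; rewrite mem_iota => /andP [h _]; rewrite /mu /=.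
  by rewrite ltnNge h mul1n.
rewrite -big_distrr /=; lia.
Qed.

Lemma count_mu1 : count (fun q => mu q == 1) idx = 2 * (N - 2 * i).
Proof.
rewrite /idx count_cat !count_map.
have -> : iota 0 N = iota 0 (2 * i) ++ iota (2 * i) (N - 2 * i) by rewrite -iotaD subnKC.
rewrite count_cat.
rewrite (eq_in_count (a2 := pred0) (s := iota 0 (2 * i))); last first.
  by move=> j; rewrite mem_iota add0n => /andP [_ h]; rewrite /mu /= h.
rewrite (eq_in_count (a2 := predT) (s := iota (2 * i) (N - 2 * i))
  (a1 := preim (fun j => (j, true)) (fun q => mu q == 1))); last first.
  by move=> j; rewrite mem_iota /= /mu /= => /andP [h _]; rewrite ltnNge h.
rewrite (eq_in_count (a2 := predT) (a1 := preim (fun j => (j, false)) (fun q => mu q == 1))) //.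
by rewrite count_pred0 !count_predT size_iota; lia.
Qed.

Lemma count_mu2 : count (fun q => mu q == 2) idx = 2 * i.
Proof.
rewrite /idx count_cat !count_map.
have -> : iota 0 N = iota 0 (2 * i) ++ iota (2 * i) (N - 2 * i) by rewrite -iotaD subnKC.
rewrite count_cat.
rewrite (eq_in_count (a2 := predT) (s := iota 0 (2 * i))); last first.
  by move=> j; rewrite mem_iota add0n => /andP [_ h]; rewrite /mu /= h.
rewrite (eq_in_count (a2 := pred0) (s := iota (2 * i) (N - 2 * i))
  (a1 := preim (fun j => (j, true)) (fun q => mu q == 2))); last first.
  by move=> j; rewrite mem_iota /= /mu /= => /andP [h _]; rewrite ltnNge h.
rewrite (eq_in_count (a2 := pred0) (a1 := preim (fun j => (j, false)) (fun q => mu q == 2))) //.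
by rewrite !count_pred0 count_predT size_iota; lia.
Qed.


Lemma bases_distinct : all (@distinct3 v) (bases_of idx gen mu).
Proof.
apply/allP => B /flatten_mapP [q qi]; rewrite mem_nseq => /andP [_ /eqP ->].
exact: gen_distinct.
Qed.

Lemma HS_d d (HxD : forall j, j < N -> fx j = (fa j + fb j) %% v) q : q \in idx ->
  \sum_(pq <- dpairs (gen q)) (dif pq.1 pq.2 == d) = count (pred1 d) (tr q.1).
Proof.
move=> /idxN jN; case: (Hrange jN) => /andP [_ ha] /andP [_ hb] _.
rewrite /gen /tr; case: q.2 => /=; rewrite !big_cons big_nil /= dif_0a // dif_0c dif_ab //.
  by rewrite -HxD //; lia.
rewrite (addnC (fb q.1) (fa q.1)) -HxD //.
by move: (fa q.1 == d) (fb q.1 == d) (fx q.1 == d) => [] [] [].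
Qed.

Lemma HS_c d q : q \in idx ->
  \sum_(pq <- cpairs (gen q)) (dif pq.1 pq.2 == d) = count (pred1 d) (tr q.1).
Proof.
move=> /idxN jN; case: (Hrange jN) => /andP [_ ha] /andP [_ hb] _.
rewrite /gen /tr; case: q.2 => /=; rewrite !big_cons big_nil /= dif_0a // dif_c0 dif_ab //.
  by rewrite -HxM //; lia.
rewrite (addnC (fb q.1) (fa q.1)) -HxM //.
by move: (fa q.1 == d) (fb q.1 == d) (fx q.1 == d) => [] [] [].
Qed.

Theorem DTS_ok (HxD : forall j, j < N -> fx j = (fa j + fb j) %% v) :
  cyclic_DTS 2 (sys (bases_of idx gen mu)) /\
  fine_c (@deqv v) (sys (bases_of idx gen mu)) 1 = 2 * (N - 2 * i) /\
  fine_c (@deqv v) (sys (bases_of idx gen mu)) 2 = 2 * i.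
Proof.
split; [|split].
- split.
  + exact: sys_distinct bases_distinct.
  + apply: sys_cover; first exact: dpairs_shift.
    move=> d dv; apply: cover_gen => // q qi; exact: HS_d.
  + move=> t; apply: sys_shift; exact: deqv_good.
- rewrite (@fine_gen _ idx gen mu _ _ deqv_good idx_uniq orb_d stab_d gen_distinct) //.
  exact: count_mu1.
- rewrite (@fine_gen _ idx gen mu _ _ deqv_good idx_uniq orb_d stab_d gen_distinct) //.
  exact: count_mu2.
Qed.

Theorem MTS_ok :
  cyclic_MTS 2 (sys (bases_of idx gen mu)) /\
  fine_c (@ceqv v) (sys (bases_of idx gen mu)) 1 = 2 * (N - 2 * i) /\
  fine_c (@ceqv v) (sys (bases_of idx gen mu)) 2 = 2 * i.
Proof.
split; [|split].
- split.
  + exact: sys_distinct bases_distinct.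
  + apply: sys_cover; first exact: cpairs_shift.
    move=> d dv; apply: cover_gen => // q qi; exact: HS_c.
  + move=> t; apply: sys_shift; exact: ceqv_good.
- rewrite (@fine_gen _ idx gen mu _ _ ceqv_good idx_uniq orb_c stab_c gen_distinct) //.
  exact: count_mu1.
- rewrite (@fine_gen _ idx gen mu _ _ ceqv_good idx_uniq orb_c stab_c gen_distinct) //.
  exact: count_mu2.
Qed.

End Constr.
End Gen.

Lemma sum_hit n (f : nat -> nat) d (P : bool) :
  (forall k, k < n -> f k = d -> P) -> (P -> exists2 k, k < n & f k = d) ->
  (forall k k', k < n -> k' < n -> f k = d -> f k' = d -> k = k') ->
  \sum_(k <- iota 0 n) (f k == d) = P.
Proof.
move=> H1 H2 H3; case: (boolP P) => [/H2 [k0 k0n fk0]|nP].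
  rewrite (bigD1_seq k0) ?iota_uniq ?mem_iota //= fk0 eqxx big1_seq // => k /andP [nk kin].
  rewrite mem_iota in kin; case: eqP => // fk.
  have E : k = k0 by apply: H3 => //; lia.
  by rewrite E eqxx in nk.
rewrite big1_seq // => k; rewrite mem_iota => /andP [_ kin]; case: eqP => // fk.
case/negP: nP; apply: (H1 k) => //; lia.
Qed.

Lemma S_up n c d : \sum_(k <- iota 0 n) (c + k == d) = (c <= d) && (d < c + n).
Proof.
apply: sum_hit => [k kn <-|/andP [h1 h2]|]; [lia| exists (d - c); lia | lia].
Qed.

Lemma S_down n c d : n <= c -> \sum_(k <- iota 0 n) (c - k == d) = (c - n < d) && (d <= c).
Proof.
move=> nc; apply: sum_hit => [k kn <-|/andP [h1 h2]|]; [lia| exists (c - d); lia | lia].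
Qed.

Lemma S_down2 n c d : 2 * n <= c + 1 ->
  \sum_(k <- iota 0 n) (c - 2 * k == d) = [&& c + 2 - 2 * n <= d, d <= c & ~~ odd (c - d)].
Proof.
move=> nc; apply: sum_hit => [k kn <-|/and3P [h1 h2 h3]|]; [lia| exists ((c - d) %/ 2); lia | lia].
Qed.

Lemma split2 n (F : nat -> nat) :
  \sum_(j <- iota 0 (2 * n)) F j = \sum_(k <- iota 0 n) F k + \sum_(k <- iota 0 n) F (n + k).
Proof.
rewrite mul2n -addnn iotaD big_cat add0n.
have -> : iota n n = map (addn n) (iota 0 n) by rewrite -iotaDl addn0.
by rewrite big_map.
Qed.

Definition faD n j := if j < n then 3 * n + 1 + j else 4 * n + 1 + (j - n).
Definition fbD n j := if j < n then 3 * n - 1 - 2 * j else 3 * n - 2 * (j - n).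
Definition fxD n j := if j < n then 6 * n - j else n - (j - n).
Definition faM n j := if j < n then 2 * n + 1 + j else 1 + (j - n).
Definition fbM n j := if j < n then 5 * n - 2 * j else 5 * n - 1 - 2 * (j - n).
Definition fxM n j := if j < n then 5 * n + 1 + j else n + 1 + (j - n).


Ltac evalb := repeat match goal with |- context [nat_of_bool ?b] =>
  (match b with true => fail 1 | false => fail 1 | _ => idtac end);
  first [ have -> : b = true by lia | have -> : b = false by lia ] end.

Ltac finish_d d n :=
  case: (leqP d n) => ?; [| case: (leqP d (2 * n)) => ?; [| case: (leqP d (3 * n)) => ?;
    [| case: (leqP d (4 * n)) => ?; [| case: (leqP d (5 * n)) => ?]]]];
  case: (boolP (odd d)) => ?; case: (boolP (odd n)) => ?; evalb; by [].

Section Conc.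
Variable n : nat.
Hypothesis n1 : 1 <= n.

Lemma RD j : j < 2 * n -> [/\ 0 < faD n j < 6 * n + 1, 0 < fbD n j < 6 * n + 1 & 0 < fxD n j < 6 * n + 1].
Proof. move=> hj; rewrite /faD /fbD /fxD; case: ifP => h; split; lia. Qed.

Lemma RM j : j < 2 * n -> [/\ 0 < faM n j < 6 * n + 1, 0 < fbM n j < 6 * n + 1 & 0 < fxM n j < 6 * n + 1].
Proof. move=> hj; rewrite /faM /fbM /fxM; case: ifP => h; split; lia. Qed.

Lemma RelD j : j < 2 * n -> fxD n j = (faD n j + fbD n j) %% (6 * n + 1).
Proof.
move=> hj; rewrite /faD /fbD /fxD; case: ifP => h.
  by rewrite modn_small; lia.
rewrite (_ : 4 * n + 1 + (j - n) + (3 * n - 2 * (j - n)) = (n - (j - n)) + (6 * n + 1)); last by lia.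
by rewrite modnDr modn_small; lia.
Qed.

Lemma RelM j : j < 2 * n -> fxM n j = (6 * n + 1 - (faM n j + fbM n j) %% (6 * n + 1)) %% (6 * n + 1).
Proof.
move=> hj; rewrite /faM /fbM /fxM; case: ifP => h.
  rewrite (_ : 2 * n + 1 + j + (5 * n - 2 * j) = (n - j) + (6 * n + 1)); last by lia.
  rewrite modnDr (modn_small (m := n - j)); last by lia.
  rewrite modn_small; lia.
rewrite (modn_small (m := 1 + (j - n) + _)); last by lia.
rewrite modn_small; lia.
Qed.

Lemma C0D j : j < 2 * n -> (faD n j + fbD n j) %% (6 * n + 1) != 0.
Proof. move=> hj; rewrite -RelD //; case: (RD hj) => _ _; lia. Qed.

Lemma C0M j : j < 2 * n -> (faM n j + fbM n j) %% (6 * n + 1) != 0.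
Proof.
move=> hj; apply/negP => /eqP E; have := RelM hj; rewrite E subn0 modnn.
case: (RM hj) => _ _; lia.
Qed.

Lemma PD d : 0 < d < 6 * n + 1 ->
  \sum_(j <- iota 0 (2 * n)) count (pred1 d) [:: faD n j; fbD n j; fxD n j] = 1.
Proof.
move=> dv; rewrite split2.
rewrite (eq_big_seq (fun k => ((3 * n + 1 + k == d) + (3 * n - 1 - 2 * k == d)) + (6 * n - k == d))); last first.
  by move=> k; rewrite mem_iota add0n => /andP [_ h]; rewrite /= /faD /fbD /fxD h addn0 addnA.
rewrite [X in _ + X = _](eq_big_seq (fun k => ((4 * n + 1 + k == d) + (3 * n - 2 * k == d)) + (n - k == d))); last first.
  move=> k; rewrite mem_iota => /andP [_ h]; rewrite /= /faD /fbD /fxD.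
  have -> : n + k < n = false by lia.
  by rewrite addKn addn0 addnA.
rewrite !big_split /= S_up S_up.
rewrite S_down2; last by lia.
rewrite S_down2; last by lia.
rewrite S_down; last by lia.
rewrite S_down; last by lia.
finish_d d n.
Qed.

Lemma PM d : 0 < d < 6 * n + 1 ->
  \sum_(j <- iota 0 (2 * n)) count (pred1 d) [:: faM n j; fbM n j; fxM n j] = 1.
Proof.
move=> dv; rewrite split2.
rewrite (eq_big_seq (fun k => ((2 * n + 1 + k == d) + (5 * n - 2 * k == d)) + (5 * n + 1 + k == d))); last first.
  by move=> k; rewrite mem_iota add0n => /andP [_ h]; rewrite /= /faM /fbM /fxM h addn0 addnA.
rewrite [X in _ + X = _](eq_big_seq (fun k => ((1 + k == d) + (5 * n - 1 - 2 * k == d)) + (n + 1 + k == d))); last first.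
  move=> k; rewrite mem_iota => /andP [_ h]; rewrite /= /faM /fbM /fxM.
  have -> : n + k < n = false by lia.
  by rewrite addKn addn0 addnA.
rewrite !big_split /= !S_up.
rewrite S_down2; last by lia.
rewrite S_down2; last by lia.
finish_d d n.
Qed.

End Conc.

Theorem mainTheorem4 (n i : nat) :
  1 <= n -> i <= n ->
  (exists s : seq (trip (6 * n + 1)),
      cyclic_DTS 2 s /\
      fine_c (@deqv _) s 1 = 4 * n - 4 * i /\ fine_c (@deqv _) s 2 = 2 * i) /\
  (exists s : seq (trip (6 * n + 1)),
      cyclic_MTS 2 s /\
      fine_c (@ceqv _) s 1 = 4 * n - 4 * i /\ fine_c (@ceqv _) s 2 = 2 * i).
Proof.
move=> n1 iN.
have vpos : 0 < 6 * n + 1 by rewrite addn1.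
have Hi : 2 * i <= 2 * n by lia.
split.
- have [H1 [H2 H3]] := DTS_ok vpos (@RD n n1) (@PD n n1) Hi (@C0D n n1) (@RelD n n1).
  eexists; split; first exact: H1.
  by rewrite H2 H3; split => //; lia.
- have [H1 [H2 H3]] := MTS_ok vpos (@RM n n1) (@PM n n1) Hi (@C0M n n1) (@RelM n n1).
  eexists; split; first exact: H1.
  by rewrite H2 H3; split => //; lia.
Qed.
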